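(* Let $n$ be a positive integer and let $D$ be a set of divisors of $n$ such that $\gcd(D\cup\{n\})=1$. Let $t$ be the size of a smallest subset of $D$ which generates $\mathbb{Z}_n$ as an additive group. Let $S=\bigcup_{d\in D}G_n(d)$ and $\mathcal G=G(n;S)$. Then $$t\leq \operatorname{diam}\mathcal G\leq 2t+1.$$
   Context: For a divisor $d$ of $n$, $G_n(d)=\{k : 1\le k\le n-1,\ \gcd(k,n)=d\}$. For a set $S\subseteq\{1,\dots,n-1\}$ with $s\in S$ iff $n-s\in S$, the circulant graph $G(n;S)$ is the undirected graph on vertex set $\mathbb{Z}_n$ in which $i$ and $j$ are adjacent iff $i-j \bmod n\in S$. $\operatorname{diam}$ denotes the graph diameter (maximum over vertex pairs of the shortest-path distance). *)

(* Defs.v *)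
From mathcomp Require Import all_boot.
Set Implicit Arguments. Unset Strict Implicit. Unset Printing Implicit Defensive.

Definition Gn (n d : nat) : pred nat :=
  [pred k | (1 <= k <= n.-1) && (gcdn k n == d)].

Definition Sunion (n : nat) (D : seq nat) : pred nat :=
  [pred k | has (fun d => k \in Gn n d) D].

Definition circ_adj (n : nat) (S : pred nat) : rel 'I_n :=
  fun i j => ((i + n - j) %% n) \in S.

Definition walkb (n : nat) (e : rel 'I_n) (k : nat) (i j : 'I_n) : bool :=
  [exists p : k.-tuple 'I_n, path e i p && (last i p == j)].

(* shortest-path distance: least k < n with a walk of length k from i to j;
   (a shortest path in a graph on n vertices has length <= n-1);
   value n (standing for "infinity") if j is unreachable from i *)
Definition gdist (n : nat) (e : rel 'I_n) (i j : 'I_n) : nat :=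
  find (fun k => walkb e k i j) (iota 0 n).

Definition gdiam (n : nat) (e : rel 'I_n) : nat :=
  \max_(i : 'I_n) \max_(j : 'I_n) gdist e i j.

(* E generates Z_n as an additive group: every residue is a combination
   (with natural coefficients, which suffices in a finite group) of E mod n *)
Definition generates_Zn (n : nat) (E : seq nat) : Prop :=
  forall x : nat, exists c : nat -> nat,
    x = \sum_(e <- E) c e * e %[mod n].

Definition min_gen_size (n : nat) (D : seq nat) (t : nat) : Prop :=
  (exists E : seq nat, [/\ uniq E, {subset E <= D}, generates_Zn n E & size E = t])
  /\ (forall E : seq nat, uniq E -> {subset E <= D} -> generates_Zn n E -> t <= size E).

(* Main.v *)
Require Import Defs.
From mathcomp Require Import all_boot zify.

Lemma coprime_primes x m : 0 < m ->
  (forall p, prime p -> p %| x -> p %| m -> False) -> coprime x m.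
Proof.
move=> m0 H; rewrite /coprime; apply/negPn/negP => Hg.
have g0 : 0 < gcdn x m by rewrite gcdn_gt0 m0 orbT.
have g1 : 1 < gcdn x m by lia.
apply: (H (pdiv (gcdn x m))); first exact: pdiv_prime.
- exact: dvdn_trans (pdiv_dvd _) (dvdn_gcdl _ _).
- exact: dvdn_trans (pdiv_dvd _) (dvdn_gcdr _ _).
Qed.

Lemma two_units m b : 0 < m -> exists u v,
  [/\ coprime u m, coprime v m & u + v = 2 * b %[mod m]].
Proof.
move=> m0.
set a := 2 * b.
pose pi : nat_pred := [pred p | ~~ (p %| a)].
set B := m`_pi.
have B0 : 0 < B by apply: part_gt0.
have HB1 : forall p, prime p -> p %| B -> ~~ (p %| a).
  move=> p pp pB.
  have : p \in pi by apply: (pnatPpi (part_pnat pi m)); rewrite mem_primes pp B0 pB.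
  by [].
have HB2 : forall p, prime p -> p %| m -> ~~ (p %| a) -> p %| B.
  move=> p pp pm pa.
  move: pm; rewrite -(partnC pi m0) Euclid_dvdM // => /orP[//|pB'].
  have : p \in pi^'.
    apply: (pnatPpi (part_pnat _ m)).
    by rewrite mem_primes pp part_gt0.
  by rewrite !inE negbK => /negPn; rewrite (negbTE pa).
exists (2 * a + B), ((a + B) * m.-1); split.
- apply: coprime_primes => // p pp pu pm.
  case pa: (p %| a).
  + have pB : p %| B by rewrite -(dvdn_addr _ (dvdn_mull 2 pa)).
    by move: (HB1 p pp pB); rewrite pa.
  + have pB := HB2 p pp pm (negbT pa).
    have : p %| 2 * a by rewrite -(dvdn_addl _ pB).
    rewrite Euclid_dvdM // pa orbF => p2.
    have p2' : p = 2.
      have := dvdn_leq (isT : 0 < 2) p2; have := prime_gt1 pp; lia.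
    by move: pa; rewrite p2' /a dvdn_mulr.
- rewrite coprimeMl; apply/andP; split.
  + apply: coprime_primes => // p pp pu pm.
    case pa: (p %| a).
    * have pB : p %| B by rewrite -(dvdn_addr _ pa).
      by move: (HB1 p pp pB); rewrite pa.
    * have pB := HB2 p pp pm (negbT pa).
      by move: pa; rewrite -(dvdn_addl _ pB) pu.
  + by rewrite -(prednK m0) /= coprimenS.
- have -> : 2 * a + B + (a + B) * m.-1 = (a + B) * m + a.
    rewrite -[in RHS](prednK m0). nia.
  by rewrite modnMDl.
Qed.

Lemma steps_walk (n : nat) (S : pred nat) (n0 : 0 < n) (s : seq nat) :
  all (fun k => (k < n) && (k \in S)) s ->
  forall i j : 'I_n, (\sum_(k <- s) k + j = i %[mod n]) ->
  exists p : seq 'I_n, [/\ size p = size s, path (@circ_adj n S) i p & last i p = j].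
Proof.
elim: s => [|k s IH] /= Hall i j.
  rewrite big_nil add0n (modn_small (ltn_ord j)) (modn_small (ltn_ord i)).
  by move=> /val_inj ->; exists [::].
move/andP: Hall => [/andP[kn kS] Hall] Hsum.
pose x := Ordinal (ltn_pmod (i + n - k) n0).
have Hx : x + k = i %[mod n].
  by rewrite /= modnDml subnK ?modnDr //; lia.
have Hs' : \sum_(k0 <- s) k0 + j = x %[mod n].
  move: Hsum; rewrite big_cons => Hsum.
  apply/eqP; rewrite -(eqn_modDl k) addnA Hsum addnC Hx.
  by [].
have [p [Hs Hp Hl]] := IH Hall x j Hs'.
exists (x :: p); split => //=; rewrite ?Hs // Hp andbT /circ_adj.
suff -> : (i + n - x) %% n = k by [].
rewrite -(modn_small kn); apply/eqP; rewrite -(eqn_modDr x).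
rewrite subnK; last by have := ltn_ord x; have := ltn_ord i; lia.
by rewrite modnDr addnC Hx.
Qed.

Lemma walk_steps (n : nat) (S : pred nat) (p : seq 'I_n) :
  forall i j : 'I_n, path (@circ_adj n S) i p -> last i p = j ->
  exists s : seq nat, [/\ size s = size p, all (mem S) s &
     \sum_(k <- s) k + j = i %[mod n]].
Proof.
elim: p => [|x p IH] i j /=.
  by move=> _ ->; exists [::]; rewrite big_nil.
move=> /andP[ix Hp] Hl.
have [s [Hs Ha Hsum]] := IH x j Hp Hl.
exists (((i + n - x) %% n) :: s); split => /=; first by rewrite Hs.
  by rewrite Ha andbT.
rewrite big_cons -addnA modnDml -modnDmr Hsum modnDmr subnK ?modnDr //.
by have := ltn_ord x; lia.
Qed.

Definition rep (n : nat) (E : seq nat) (x : nat) :=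
  exists c : nat -> nat, x = \sum_(e <- E) c e * e %[mod n].

Lemma rep0 n E : rep n E 0.
Proof. by exists (fun _ => 0); rewrite big1. Qed.

Lemma repD n E x y : rep n E x -> rep n E y -> rep n E (x + y).
Proof.
move=> [c1 H1] [c2 H2]; exists (fun e => c1 e + c2 e).
rewrite -modnDm H1 H2 modnDm.
by congr (_ %% n); rewrite -big_split /=; apply: eq_bigr => e _; rewrite mulnDl.
Qed.

Lemma rep_mod n E x y : x = y %[mod n] -> rep n E y -> rep n E x.
Proof. by move=> H [c Hc]; exists c; rewrite H. Qed.

Lemma rep_mul n E e k : uniq E -> e \in E -> rep n E (k * e).
Proof.
move=> uE eE; exists (fun y => if y == e then k else 0).
rewrite (bigD1_seq e) //= eqxx big1 ?addn0 // => y /negbTE ->; by [].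
Qed.

Lemma rep_all n E : rep n E 1 -> generates_Zn n E.
Proof.
move=> H1 x; elim: x => [|x IH]; first exact: rep0.
by rewrite -addn1; apply: repD.
Qed.

Lemma lower n D t (s : seq nat) : 0 < n -> min_gen_size n D t ->
  all (mem (Sunion n D)) s -> \sum_(k <- s) k = 1 %[mod n] ->
  t <= size s /\ t <= n.
Proof.
move=> n0 [_ Hmin] Ha Hsum.
set E := undup [seq gcdn k n | k <- s].
have uE : uniq E by apply: undup_uniq.
have sED : {subset E <= D}.
  move=> d; rewrite mem_undup => /mapP [k ks ->].
  have := allP Ha k ks; rewrite inE => /hasP [d' d'D]; rewrite inE => /andP [_ /eqP ->].
  by [].
have gE : generates_Zn n E.
  apply: rep_all; apply: (@rep_mod n E 1 _ (esym Hsum)).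
  rewrite big_seq; apply: big_ind; [exact: rep0 | exact: repD|].
  move=> k ks; rewrite -(divnK (dvdn_gcdl k n)); apply: rep_mul => //.
  by rewrite mem_undup; apply: map_f.
have := Hmin E uE sED gE => tE; split.
  by apply: leq_trans tE _; rewrite (leq_trans (size_undup _)) // size_map.
apply: leq_trans tE _.
have -> : n = size (iota 1 n) by rewrite size_iota.
apply: uniq_leq_size => // g; rewrite mem_undup => /mapP [k _ ->].
rewrite mem_iota gcdn_gt0 n0 orbT /= add1n ltnS.
by apply: dvdn_leq => //; apply: dvdn_gcdr.
Qed.

Definition P n D := fun k => (k < n) && (k \in Sunion n D).

Lemma step_in n D e u : 0 < n -> e \in D -> e %| n -> e < n ->
  coprime u (n %/ e) -> P n D ((u * e) %% n).
Proof.
move=> n0 eD en lt cu; apply/andP; split; first exact: ltn_pmod.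
have e0 : 0 < e by apply: dvdn_gt0 en.
have Hg : gcdn ((u * e) %% n) n = e.
  rewrite gcdn_modl -[X in gcdn _ X](divnK en) -muln_gcdl.
  by move: cu; rewrite /coprime => /eqP ->; rewrite mul1n.
apply/hasP; exists e => //; rewrite inE Hg eqxx andbT.
have : (u * e) %% n < n by apply: ltn_pmod.
case: ((u * e) %% n) Hg => [|k] Hg' ; last by lia.
by rewrite gcd0n in Hg'; lia.
Qed.

Lemma pairs n D (E : seq nat) (c : nat -> nat) : 0 < n ->
  (forall d, d \in D -> d %| n) -> {subset E <= D} ->
  exists s, [/\ all (P n D) s, size s <= 2 * size E &
     \sum_(k <- s) k = \sum_(e <- E) 2 * (c e * e) %[mod n]].
Proof.
move=> n0 Hdiv; elim: E => [|e E IH] sED.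
  by exists [::]; rewrite !big_nil.
have [|s [Ha Hs Hsum]] := IH; first by move=> d dE; apply: sED; rewrite inE dE orbT.
have eD : e \in D by apply: sED; rewrite inE eqxx.
have en := Hdiv e eD.
have e0 : 0 < e by apply: dvdn_gt0 en.
case: (ltngtP e n) => [lt | gt | eq].
- have m0 : 0 < n %/ e by rewrite divn_gt0 // dvdn_leq.
  have [u [v [cu cv huv]]] := two_units _ (c e) m0.
  exists ((u * e) %% n :: (v * e) %% n :: s); split.
  + by rewrite /= Ha !step_in.
  + by rewrite /= mulnS; lia.
  + have Hue : ((u * e) %% n + (v * e) %% n) %% n = (2 * (c e * e)) %% n.
      rewrite modnDm -mulnDl mulnA -[in LHS](divnK en) -[in RHS](divnK en).
      by rewrite -!muln_modl huv.
    rewrite !big_cons addnA -modnDm Hue Hsum modnDm.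
    by [].
- by have := dvdn_leq n0 en; lia.
- exists s; split => //; first by rewrite /= mulnS; apply: leq_trans Hs _; lia.
  rewrite big_cons eq -modnDm Hsum modnDm.
  by rewrite mulnA modnMDl.
Qed.

Lemma construct n D t x : 0 < n -> (forall d, d \in D -> d %| n) ->
  min_gen_size n D t ->
  exists s, [/\ all (P n D) s, size s <= 2 * t + 1 & \sum_(k <- s) k = x %[mod n]].
Proof.
move=> n0 Hdiv [[E0 [uE sED gE szE]] _].
have Hdbl : forall y, exists s, [/\ all (P n D) s, size s <= 2 * t &
     \sum_(k <- s) k = 2 * y %[mod n]].
  move=> y; have [c Hy] := gE y.
  have [s [Ha Hs Hsum]] := @pairs n D E0 c n0 Hdiv sED.
  exists s; split => //; first by rewrite -szE.
  by rewrite Hsum -big_distrr /= -modnMm -Hy modnMm.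
case on: (odd n).
- have [s [Ha Hs Hsum]] := Hdbl (x * (n.+1)./2).
  exists s; split => //; first by lia.
  have hh : (n.+1)./2.*2 = n.+1.
    by have := odd_double_half n.+1; rewrite /= on /=.
  by rewrite Hsum mulnCA mul2n hh mulnS addnC modnMDl.
- case ox: (odd x).
  + have [e0 e0E oe0] : exists2 e0, e0 \in E0 & odd e0.
      apply/hasP; apply/negPn/negP => /hasPn Hev.
      have [c Hc] := gE 1.
      have H2 : 2 %| \sum_(e <- E0) c e * e.
        rewrite big_seq; apply: dvdn_sum => e eE.
        by apply: dvdn_mull; rewrite dvdn2 Hev.
      have n2 : 2 %| n by rewrite dvdn2 on.
      have := modn_dvdm 1 n2; rewrite Hc (modn_dvdm _ n2).
      by move: H2; rewrite /dvdn => /eqP ->.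
    have e0D := sED e0 e0E.
    have e0n := Hdiv e0 e0D.
    have e0le := dvdn_leq n0 e0n.
    have e0lt : e0 < n.
      by rewrite ltn_neqAle e0le andbT; apply/eqP => E; move: oe0; rewrite E on.
    have [s [Ha Hs Hsum]] := Hdbl (x + n - e0)./2.
    exists (e0 :: s); split.
    * rewrite /= Ha andbT /P e0lt /=; apply/hasP; exists e0 => //.
      rewrite inE (gcdn_idPl e0n) eqxx andbT.
      by case: (e0) oe0 e0lt => // k _ h; rewrite /= -ltnS prednK //; lia.
    * by rewrite /=; lia.
    * have hh : ((x + n - e0)./2).*2 = x + n - e0.
        have := odd_double_half (x + n - e0).
        rewrite oddB; last by lia.
        by rewrite oddD ox on oe0 /=.
      rewrite big_cons -modnDmr Hsum modnDmr mul2n hh.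
      by rewrite addnC subnK ?modnDr //; lia.
  + have [s [Ha Hs Hsum]] := Hdbl x./2.
    exists s; split => //; first by lia.
    rewrite Hsum mul2n.
    by have := odd_double_half x; rewrite ox add0n => ->.
Qed.

Theorem theorem4 (n : nat) (D : seq nat) (t : nat) :
  0 < n ->
  (forall d, d \in D -> d %| n) ->
  \big[gcdn/n]_(d <- D) d = 1 ->
  min_gen_size n D t ->
  t <= @gdiam n (@circ_adj n (Sunion n D)) <= 2 * t + 1.
Proof.
move=> n0 Hdiv _ Hmin.
have walk_of : forall (s : seq nat) (i j : 'I_n), all (P n D) s ->
    \sum_(k <- s) k + j = i %[mod n] ->
    walkb (@circ_adj n (Sunion n D)) (size s) i j.
  move=> s i j Ha Hs.
  have Ha' : all (fun k => (k < n) && (k \in Sunion n D)) s by [].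
  have [p [Hp Hpath Hl]] := @steps_walk n (Sunion n D) n0 s Ha' i j Hs.
  apply/existsP; have Hsz : size p == size s by rewrite Hp.
  by exists (Tuple Hsz); rewrite /= Hpath Hl eqxx.
apply/andP; split.
- case: (ltngtP n 1) => [|n1|n1]; first by lia.
  + set i1 := Ordinal n1; set i0 := Ordinal n0.
    apply: leq_trans (leq_bigmax i1); apply: leq_trans (leq_bigmax i0).
    rewrite /gdist.
    case: (boolP (has (fun k => walkb (@circ_adj n (Sunion n D)) k i1 i0) (iota 0 n))) => Hh.
    * have := nth_find 0 Hh.
      have := Hh; rewrite has_find size_iota => klt.
      rewrite nth_iota // add0n => /existsP [p /andP [Hpath /eqP Hl]].
      have [s [Hs Ha Hsum]] := @walk_steps n _ p i1 i0 Hpath Hl.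
      rewrite addn0 in Hsum.
      have [+ _] := @lower n D t s n0 Hmin Ha Hsum.
      by rewrite Hs size_tuple.
    * rewrite (hasNfind Hh) size_iota.
      have [s [Ha _ Hsum]] := @construct n D t 1 n0 Hdiv Hmin.
      have Ha' : all (mem (Sunion n D)) s.
        by apply: sub_all Ha => k /andP [].
      by have [_ ->] := @lower n D t s n0 Hmin Ha' Hsum.
  + have sub0 : {subset [::] <= D} by [].
    apply: leq_trans (Hmin.2 [::] isT sub0 _) _ => //.
    by move=> x; exists (fun _ => 0); rewrite n1 !modn1.
- apply/bigmax_leqP => i _; apply/bigmax_leqP => j _.
  have [s [Ha Hs Hsum]] := @construct n D t (i + n - j) n0 Hdiv Hmin.
  have Hs' : \sum_(k <- s) k + j = i %[mod n].
    rewrite -modnDml Hsum modnDml subnK ?modnDr //.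
    by have := ltn_ord j; lia.
  have Hw := walk_of s i j Ha Hs'.
  rewrite /gdist; case: (ltnP (size s) n) => sn.
  + apply: leq_trans Hs; rewrite leqNgt; apply/negP => H.
    by have := before_find 0 H; rewrite nth_iota // add0n Hw.
  + by apply: leq_trans (find_size _ _) _; rewrite size_iota; apply: leq_trans sn Hs.
Qed.
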